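(* Let $m\ge 2$ be an integer and let $n$ be a positive integer with $m^j\le n<m^{j+1}$ for some integer $j\ge 0$, with base $m$ representation $n=\alpha_j m^j+\cdots+\alpha_1 m+\alpha_0$ ($\alpha_j>0$, $0\le\alpha_i\le m-1$). For an $m$-ary partition $\lambda=(\lambda_\ell,\ldots,\lambda_0)$ of $n$ (so $n=\sum_{i=0}^\ell \lambda_i m^i$, $\lambda_\ell>0$, $\lambda_i\ge 0$), setting $\lambda_k=0$ for $\ell<k\le j$, define $\varphi(\lambda)=(\beta_j,\beta_{j-1},\ldots,\beta_1)$ by \[ \beta_i=\sum_{k=i}^{j}m^{k-i}(\alpha_k-\lambda_k),\qquad 1\le i\le j. \] Then $\varphi$ is a bijection from the set $\mathcal{B}_m(n)$ of $m$-ary partitions of $n$ onto the set \[ \mathcal{S}_m(n)=\{(\beta_j,\ldots,\beta_1)\in\mathbb{Z}^j:\,0\le\beta_j\le\alpha_j\text{ and }0\le\beta_t\le\alpha_t+m\beta_{t+1}\text{ for }1\le t\le j-1\}. \]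
   Context: An $m$-ary partition of $n$ is a partition of $n$ into powers of $m$, encoded as the sequence $(\lambda_\ell,\ldots,\lambda_0)$ of multiplicities, where $\lambda_i$ is the number of parts equal to $m^i$, $\lambda_\ell>0$ and $\lambda_i\ge0$; necessarily $\ell\le j$. $\mathcal{B}_m(n)$ is the set of all such partitions. *)

(* Defs.v *)
From mathcomp Require Import all_boot all_order all_algebra.
Set Implicit Arguments. Unset Strict Implicit. Unset Printing Implicit Defensive.
Import Order.TTheory GRing.Theory Num.Theory.

Definition digit (m n k : nat) : nat := (n %/ m ^ k) %% m.

(* An m-ary partition of n, encoded LITTLE-ENDIAN as the sequence of
   multiplicities lam = [:: lam_0; lam_1; ...; lam_l] (lam_i = number of parts
   equal to m^i), with lam_l > 0.  Beyond index l, nth 0 lam k = 0. *)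
Definition is_mary_partition (m n : nat) (lam : seq nat) : bool :=
  [&& lam != [::], 0 < last 0 lam &
      \sum_(i < size lam) nth 0 lam i * m ^ i == n].

Definition beta (m n j : nat) (lam : seq nat) (i : nat) : int :=
  (\sum_(i <= k < j.+1)
     ((m ^ (k - i))%:Z * ((digit m n k)%:Z - (nth 0 lam k)%:Z)))%R.

(* phi(lam) = (beta_1, ..., beta_j), stored LITTLE-ENDIAN: entry t-1 is beta_t. *)
Definition phi (m n j : nat) (lam : seq nat) : seq int :=
  [seq beta m n j lam t | t <- iota 1 j].

Definition in_S (m n j : nat) (b : seq int) : bool :=
  let bt t := nth 0%R b t.-1 in
  [&& size b == j,
      (0 < j) ==> ((0 <= bt j)%R && (bt j <= (digit m n j)%:Z)%R) &
      all (fun t => (0 <= bt t)%R && (bt t <= (digit m n t)%:Z + (m%:Z) * bt t.+1)%R)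
          (iota 1 j.-1)].

(* Main.v *)
Require Import Defs.
From mathcomp Require Import all_boot all_order all_algebra.
From mathcomp Require Import zify ring.
Import GRing.Theory Num.Theory.

Lemma digits_sum m n i : 0 < m ->
  \sum_(k < i) digit m n k * m ^ k = n %% m ^ i.
Proof.
move=> m0; elim: i => [|i IH]; first by rewrite big_ord0 expn0 modn1.
rewrite big_ord_recr /= IH /digit.
set q := n %/ m ^ i.
have ->: n %% m ^ i.+1 = (n %% m ^ i) + (q %% m) * m ^ i.
  have hn : n = (q %/ m) * m ^ i.+1 + ((q %% m) * m ^ i + n %% m ^ i).
    rewrite {1}(divn_eq n (m ^ i)) -/q {1}(divn_eq q m) expnS.
    nia.
  rewrite {1}hn modnMDl modn_small; first by rewrite addnC.
  have h1 : n %% m ^ i < m ^ i by rewrite ltn_pmod // expn_gt0 m0.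
  have h2 : q %% m < m by rewrite ltn_pmod.
  rewrite expnS.
  have : (q %% m).+1 * m ^ i <= m * m ^ i by rewrite leq_mul2r h2 orbT.
  rewrite mulSn; lia.
done.
Qed.

Lemma sum_widen (s : seq nat) m N : size s <= N ->
  \sum_(i < size s) nth 0 s i * m ^ i = \sum_(i < N) nth 0 s i * m ^ i.
Proof.
move=> hs; rewrite -(big_mkord xpredT (fun i => nth 0 s i * m ^ i)).
rewrite -(big_mkord xpredT (fun i => nth 0 s i * m ^ i)).
rewrite (@big_cat_nat _ _ _ (size s) 0 N _ _ (leq0n _) hs) /= [X in _ = _ + X]big1_seq ?addn0 //.
move=> i /andP [_]; rewrite mem_index_iota => /andP [hi _].
by rewrite nth_default.
Qed.

Lemma part_size m n j lam : 2 <= m -> n < m ^ j.+1 ->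
  is_mary_partition m n lam ->
  size lam <= j.+1 /\ \sum_(k < j.+1) nth 0 lam k * m ^ k = n.
Proof.
move=> m2 hn /and3P [ne lp /eqP hs].
have hsz : size lam <= j.+1.
  case E: (size lam) ne => [|s] ne; first by move: ne; rewrite -size_eq0 E.
  move: hs; rewrite E big_ord_recr /= => hs.
  have : m ^ s <= n.
    rewrite -hs; apply: leq_trans (leq_addl _ _).
    have -> : s = (size lam).-1 by rewrite E.
    rewrite nth_last; rewrite leq_pmull //.
  move=> h; have : m ^ s < m ^ j.+1 by apply: leq_ltn_trans h hn.
  by rewrite ltn_exp2l.
split => //; by rewrite -sum_widen.
Qed.

Local Open Scope ring_scope.

Lemma PoszS I (r : seq I) (P : pred I) (F : I -> nat) :
  Posz (\sum_(i <- r | P i) F i)%N = \sum_(i <- r | P i) (F i)%:Z.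
Proof. by rewrite (big_morph Posz PoszD (erefl 0%:Z)). Qed.

Lemma keyK m n j lam i : (0 < m)%N -> (n < m ^ j.+1)%N -> (i <= j.+1)%N ->
  (\sum_(k < j.+1) nth 0 lam k * m ^ k)%N = n ->
  (m ^ i)%:Z * beta m n j lam i =
   (\sum_(k < i) nth 0 lam k * m ^ k)%N%:Z - (\sum_(k < i) digit m n k * m ^ k)%N%:Z.
Proof.
move=> m0 hn hi hs.
have hA : (\sum_(k < j.+1) digit m n k * m ^ k)%N = n by rewrite digits_sum // modn_small.
rewrite /beta mulr_sumr.
rewrite (eq_big_nat _ _ (F2 := fun k => (digit m n k * m ^ k)%N%:Z - (nth 0 lam k * m ^ k)%N%:Z)); last first.
  move=> k /andP [hik _]; rewrite mulrA -PoszM -expnD subnKC //.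
  by rewrite mulrBr -!PoszM ![(m ^ k * _)%N]mulnC.
rewrite sumrB -!PoszS.
move: hs hA; rewrite -(big_mkord xpredT (fun k => digit m n k * m ^ k)%N) -(big_mkord xpredT (fun k => nth 0 lam k * m ^ k)%N) !(@big_cat_nat nat 0%N addn i 0 j.+1) //=.
rewrite !big_mkord.
set L := (\sum_(k < i) nth 0 lam k * m ^ k)%N. set A := (\sum_(k < i) digit m n k * m ^ k)%N.
set X := (\sum_(i <= k < j.+1) digit m n k * m ^ k)%N. set Y := (\sum_(i <= k < j.+1) nth 0 lam k * m ^ k)%N.
lia.
Qed.

Lemma beta_zero m n j lam i : (j < i)%N -> beta m n j lam i = 0.
Proof. by move=> h; rewrite /beta big_geq. Qed.

Lemma beta_rec m n j lam i : (0 < m)%N -> (n < m ^ j.+1)%N -> (i <= j)%N ->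
  (\sum_(k < j.+1) nth 0 lam k * m ^ k)%N = n ->
  beta m n j lam i = (digit m n i)%:Z - (nth 0%N lam i)%:Z + m%:Z * beta m n j lam i.+1.
Proof.
move=> m0 hn hi hs.
have h1 := keyK m n j lam i.+1 m0 hn hi hs.
have h2 := keyK m n j lam i m0 hn (leqW hi) hs.
move: h1; rewrite !big_ord_recr /= => h1.
have hu : (m ^ i)%N%:Z != 0 by rewrite eqz_nat -lt0n expn_gt0 m0.
apply: (mulfI hu); rewrite h2 mulrDr mulrA -PoszM -expnSr h1.
rewrite mulrBr -!PoszM !PoszD.
rewrite ![(m ^ i * _)%N]mulnC.
set L := (\sum_(k < i) nth 0 lam k * m ^ k)%N. set A := (\sum_(k < i) digit m n k * m ^ k)%N.
set a := (digit m n i * m ^ i)%N. set b := (nth 0 lam i * m ^ i)%N.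
lia.
Qed.

Lemma nth_phi m n j lam t : (1 <= t <= j)%N ->
  nth 0 (phi m n j lam) t.-1 = beta m n j lam t.
Proof.
case/andP=> t1 tj; rewrite /phi (nth_map 0%N); last by rewrite size_iota; case: t t1 tj.
by rewrite nth_iota; [rewrite add1n prednK | case: t t1 tj].
Qed.

Lemma beta_ge0 m n j lam t : (0 < m)%N -> (n < m ^ j.+1)%N -> (t <= j.+1)%N ->
  (\sum_(k < j.+1) nth 0 lam k * m ^ k)%N = n -> 0 <= beta m n j lam t.
Proof.
move=> m0 hn ht hs.
have := keyK m n j lam t m0 hn ht hs; rewrite digits_sum //.
have : (n %% m ^ t < m ^ t)%N by rewrite ltn_pmod // expn_gt0 m0.
have : (0 < m ^ t)%N by rewrite expn_gt0 m0.
set M := (m ^ t)%N; set L := (\sum_(k < t) _)%N; set A := (n %% M)%N.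
move=> M0 AM e.
have : 0 <= L%:Z by [].
nia.
Qed.

Local Close Scope ring_scope.

Lemma nth_eq_last (s1 s2 : seq nat) : (0 < last 0 s1)%N -> (0 < last 0 s2)%N ->
  (forall i, nth 0 s1 i = nth 0 s2 i) -> s1 = s2.
Proof.
move=> l1 l2 e.
have claim : forall u v : seq nat, (0 < last 0 v)%N -> (forall i, nth 0 u i = nth 0 v i) ->
    (size v <= size u)%N.
  move=> u v lv euv; rewrite leqNgt; apply/negP => h.
  have : nth 0 v (size v).-1 = 0%N.
    rewrite -euv nth_default //; case: (size v) h => //.
  by rewrite nth_last => h0; move: lv; rewrite h0.
apply: (@eq_from_nth _ 0%N); last by move=> i _; apply: e.
by apply/eqP; rewrite eqn_leq !claim.
Qed.

Fixpoint trim (s : seq nat) : seq nat :=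
  if s is x :: s' then
    (let t := trim s' in if (t == [::]) && (x == 0%N) then [::] else x :: t)
  else [::].

Lemma nth_trim s i : nth 0 (trim s) i = nth 0 s i.
Proof.
elim: s i => [|x s IH] i //=.
case: ifP => [/andP [/eqP t0 /eqP x0] | _].
  case: i => [|i] /=; first by rewrite x0.
  by move: (IH i); rewrite t0 nth_nil.
by case: i.
Qed.

Lemma size_trim s : (size (trim s) <= size s)%N.
Proof. by elim: s => [|x s IH] //=; case: ifP. Qed.

Lemma last_trim s : trim s = [::] \/ (0 < last 0 (trim s))%N.
Proof.
elim: s => [|x s IH] /=; first by left.
case: ifP => [_|hc]; first by left.
right; move: IH hc; case: (trim s) => [|y t] /=.
  by move=> _ /negbT; rewrite lt0n.
by case => //.
Qed.

Local Open Scope ring_scope.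
Local Close Scope ring_scope.

Theorem theorem2p2 (m n j : nat) :
  2 <= m -> 0 < n -> m ^ j <= n < m ^ j.+1 ->
  (* phi maps B_m(n) into S_m(n) *)
  (forall lam, is_mary_partition m n lam -> in_S m n j (phi m n j lam)) /\
  (* phi is injective on B_m(n) *)
  (forall lam1 lam2, is_mary_partition m n lam1 -> is_mary_partition m n lam2 ->
     phi m n j lam1 = phi m n j lam2 -> lam1 = lam2) /\
  (* phi is onto S_m(n) *)
  (forall b, in_S m n j b -> exists2 lam, is_mary_partition m n lam & phi m n j lam = b).
Proof.
move=> m2 n0 /andP [hjn hnj].
have m0 : 0 < m by apply: leq_trans m2.
split; [|split].
- move=> lam hp; have [hsz hs] := part_size m n j lam m2 hnj hp.
  rewrite /in_S; apply/and3P; split.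
  + by rewrite size_map size_iota.
  + apply/implyP => j0; rewrite nth_phi ?j0 ?leqnn // beta_ge0 //=.
    rewrite (beta_rec m n j lam j m0 hnj (leqnn j) hs) beta_zero // GRing.mulr0 GRing.addr0.
    lia.
  + apply/allP => t; rewrite mem_iota => /andP [t1 t2].
    have tj : t < j by lia.
    have e2 : nth 0%R (phi m n j lam) t = beta m n j lam t.+1.
      by rewrite -(nth_phi m n j lam t.+1) //= tj.
    rewrite nth_phi ?t1 ?(ltnW tj) // e2 beta_ge0 ?(leqW (ltnW tj)) //=.
    rewrite (beta_rec m n j lam t m0 hnj (ltnW tj) hs).
    lia.
- move=> l1 l2 p1 p2 e.
  have [s1 h1] := part_size m n j l1 m2 hnj p1.
  have [s2 h2] := part_size m n j l2 m2 hnj p2.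
  have eb : forall t, 1 <= t -> beta m n j l1 t = beta m n j l2 t.
    move=> t t1; case: (leqP t j) => tj.
    + by rewrite -!nth_phi ?t1 ?tj // e.
    + by rewrite !beta_zero.
  apply: nth_eq_last; [by case/and3P: p1 | by case/and3P: p2 |] => i.
  case: i => [|i].
  + have k1 := keyK m n j l1 1 m0 hnj (ltn0Sn j) h1.
    have k2 := keyK m n j l2 1 m0 hnj (ltn0Sn j) h2.
    rewrite !big_ord1 /= expn0 !muln1 in k1 k2.
    rewrite eb // in k1.
    lia.
  + case: (leqP i.+1 j) => ij.
    * have r1 := beta_rec m n j l1 i.+1 m0 hnj ij h1.
      have r2 := beta_rec m n j l2 i.+1 m0 hnj ij h2.
      rewrite (eb i.+1) // (eb i.+2) // in r1.
      lia.
    * by rewrite !nth_default //; [apply: leq_trans s2 ij | apply: leq_trans s1 ij].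
- move=> b; rewrite /in_S => /and3P [/eqP hb hj hall].
  pose B t : int := if t is t'.+1 then nth 0%R b t' else 0%R.
  have Bj1 : B j.+1 = 0%R by rewrite /B nth_default // hb.
  have Bge0 : forall t, (0 <= B t)%R.
    case=> [|t] //=. case: (ltnP t j) => tj; last by rewrite nth_default ?hb.
    case: (ltnP t.+1 j) => tj'.
      have := allP hall t.+1; rewrite mem_iota => /(_ _) /andP [] //; lia.
    have ej : j = t.+1 by lia.
    by move: hj; rewrite ej /= => /andP [].
  pose f i : int := (Posz (digit m n i) + Posz m * B i.+1 - B i)%R.
  have fge0 : forall i, i <= j -> (0 <= f i)%R.
    move=> i ij; rewrite /f; case: i ij => [|i] ij.
      have := Bge0 1; rewrite /= => hb1; nia.
    case: (ltnP i.+1 j) => ij'.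
      have := allP hall i.+1; rewrite mem_iota => /(_ _) /andP [] //=; lia.
    have ej : j = i.+1 by lia.
    move: hj Bj1; rewrite ej /= => /andP [] _ h0 ->; lia.
  pose lam0 := mkseq (fun i => `|f i|%N) j.+1.
  pose lam := trim lam0.
  have nl : forall i, nth 0 lam i = if i < j.+1 then `|f i|%N else 0.
    move=> i; rewrite nth_trim /lam0; case: ltnP => h.
      by rewrite nth_mkseq.
    by rewrite nth_default // size_mkseq.
  have fi : forall i, i < j.+1 -> Posz (nth 0 lam i) = f i.
    by move=> i h; rewrite nl h gez0_abs // fge0.
  pose g i : int := (B i * Posz (m ^ i)%N)%R.
  have tel : forall t, t <= j.+1 ->
      Posz (\sum_(k < t) nth 0 lam k * m ^ k)%N =
      (Posz (\sum_(k < t) digit m n k * m ^ k)%N + g t)%R.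
    move=> t ht; rewrite !PoszS.
    rewrite (eq_bigr (fun k : 'I_t => (Posz (digit m n k * m ^ k)%N + (g k.+1 - g k))%R)); last first.
      move=> k _; rewrite PoszM fi; last by apply: leq_trans (ltn_ord k) ht.
      rewrite /f /g expnS !PoszM; ring.
    rewrite big_split /=.
    rewrite -(big_mkord xpredT (fun k => g k.+1 - g k)%R) telescope_sumr //.
    by rewrite /g /= GRing.mul0r GRing.subr0.
  have hsum : \sum_(k < j.+1) nth 0 lam k * m ^ k = n.
    apply/eqP; rewrite -eqz_nat tel // /g Bj1 GRing.mul0r GRing.addr0.
    by rewrite digits_sum // modn_small.
  have hsz : size lam <= j.+1 by apply: leq_trans (size_trim _) _; rewrite size_mkseq.
  exists lam.
    rewrite /is_mary_partition (sum_widen lam m j.+1 hsz) hsum eqxx andbT.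
    have [E|hl] := last_trim lam0.
      exfalso; move: hsum; rewrite /lam E big1 => [h|k _]; last by rewrite nth_nil.
      by move: n0; rewrite -h.
    by rewrite hl andbT; move: hl; rewrite -/lam; case: (lam).
  apply: (@eq_from_nth _ 0%R); first by rewrite size_map size_iota hb.
  move=> i; rewrite size_map size_iota => ij.
  have -> : nth 0%R (phi m n j lam) i = beta m n j lam i.+1 by rewrite -(nth_phi m n j lam i.+1) //= ij.
  have k := keyK m n j lam i.+1 m0 hnj (ltnW (leq_ltn_trans ij (ltnSn j))) hsum.
  rewrite tel in k; last by apply: ltnW; rewrite ltnS.
  have hu : Posz (m ^ i.+1)%N != 0%R by rewrite eqz_nat -lt0n expn_gt0 m0.
  apply: (GRing.mulfI hu); rewrite k /g /=.
  ring.
Qed.
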